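(* For $i=1,2$ let $\mathcal{C}_i$ be an $[n,k_i,d_i]_q$ linear code and $\mathcal{C}=\{(\mathbf{u},\mathbf{u}+\mathbf{v}):\mathbf{u}\in\mathcal{C}_1,\mathbf{v}\in\mathcal{C}_2\}$. Fix the Euclidean inner product (resp. the Hermitian inner product, when $q$ is an even power of a prime), with dual denoted $\perp$. Suppose that either (i) $q=2^m$ for some $m$ and $\mathcal{C}_2$ is self-orthogonal, or (ii) both $\mathcal{C}_1$ and $\mathcal{C}_2$ are self-orthogonal. Then: 1) $\mathcal{C}$ is self-orthogonal if and only if $\mathcal{C}_1\subseteq\mathcal{C}_2^{\perp}$, if and only if $\mathcal{C}_2\subseteq\mathcal{C}_1^{\perp}$; 2) $\mathcal{C}$ is LCD if and only if $2\dim(\mathcal{C}_1\cap\mathcal{C}_2^{\perp})=k_1-k_2$; 3) $\mathcal{C}$ is self-dual if and only if $\mathcal{C}_1=\mathcal{C}_2^{\perp}$, if and only if $\mathcal{C}_2=\mathcal{C}_1^{\perp}$.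
   Context: Euclidean inner product $\sum_ix_iy_i$; for $q=p^h$, $h$ even, Hermitian inner product $\sum_ix_iy_i^{\sqrt q}$. With $\perp$ the dual under the chosen inner product, $\mathcal{C}$ is self-orthogonal if $\mathcal{C}\subseteq\mathcal{C}^{\perp}$, self-dual if $\mathcal{C}=\mathcal{C}^{\perp}$, LCD if $\mathcal{C}\cap\mathcal{C}^{\perp}=\{0\}$. *)

(* Defs.v *)
From HB Require Import structures.
From mathcomp Require Import all_boot all_order all_algebra all_field.
Set Implicit Arguments. Unset Strict Implicit. Unset Printing Implicit Defensive.
Import GRing.Theory.
Local Open Scope ring_scope.

(* Linear codes of length n over a finite field F = GF(q) are subspaces of 'rV[F]_n. *)

Inductive ipform := Euclidean | Hermitian.

(* The exponent e such that the inner product is sum_i x_i * y_i^e: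
   e = 1 (Euclidean) or e = sqrt q = p^(h/2) where q = p^h (Hermitian). *)
Definition form_exp (F : finFieldType) (f : ipform) : nat :=
  match f with
  | Euclidean => 1
  | Hermitian => let p := pdiv #|F| in (p ^ (logn p #|F|)./2)%N
  end.

(* The Hermitian product is only meaningful when q = p^h with h even. *)
Definition form_ok (F : finFieldType) (f : ipform) : Prop :=
  f = Hermitian -> ~~ odd (logn (pdiv #|F|) #|F|).

Definition ip (F : finFieldType) (f : ipform) (n : nat) (x y : 'rV[F]_n) : F :=
  \sum_(i < n) x 0 i * (y 0 i) ^+ form_exp F f.

Definition dual (F : finFieldType) (f : ipform) (n : nat)
  (C : {vspace 'rV[F]_n}) : {vspace 'rV[F]_n} :=
  <<enum [set x : 'rV[F]_n | [forall c : 'rV[F]_n, (c \in C) ==> (ip f c x == 0%R)]]>>%VS.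

Definition plotkin (F : finFieldType) (n : nat) (C1 C2 : {vspace 'rV[F]_n})
  : {vspace 'rV[F]_(n + n)} :=
  <<enum [set row_mx w.1 (w.1 + w.2) |
          w in [set w : 'rV[F]_n * 'rV[F]_n | (w.1 \in C1) && (w.2 \in C2)]]>>%VS.

Definition self_orthogonal (F : finFieldType) (f : ipform) (n : nat) (C : {vspace 'rV[F]_n}) :=
  (C <= dual f C)%VS.
Definition self_dual (F : finFieldType) (f : ipform) (n : nat) (C : {vspace 'rV[F]_n}) :=
  C = dual f C.
Definition LCD (F : finFieldType) (f : ipform) (n : nat) (C : {vspace 'rV[F]_n}) :=
  (C :&: dual f C)%VS = 0%VS.

(* Main.v *)
Require Import Defs.
From HB Require Import structures.
From mathcomp Require Import all_boot all_order all_algebra all_field.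
From mathcomp Require Import zify.
Set Implicit Arguments. Unset Strict Implicit. Unset Printing Implicit Defensive.
Import GRing.Theory.
Local Open Scope ring_scope.

Section Sg.
Variables (F : finFieldType) (f : ipform).

Lemma char_pdiv : pdiv #|F| \in [pchar F] /\ #|F| = (pdiv #|F| ^ logn (pdiv #|F|) #|F|)%N.
Proof.
have [p pr_p chp] := finPcharP F.
have := card_pprimeChar chp => /= cF.
have n_gt0 : (0 < logn p #|F|)%N.
  by rewrite lt0n; apply/eqP=> e0; move: cF; rewrite e0 expn0 => c1; have := finNzRing_gt1 F; rewrite c1.
have pd : pdiv #|F| = p by rewrite {1}cF -(prednK n_gt0) pdiv_pfactor.
by rewrite pd; split.
Qed.
Definition sg (x : F) := x ^+ form_exp F f.

Lemma e_gt0 : (0 < form_exp F f)%N.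
Proof.
case: f => //=; rewrite expn_gt0 pdiv_gt0 //. 
Qed.

Lemma sgD x y : sg (x + y) = sg x + sg y.
Proof.
rewrite /sg; case: f; first by rewrite /= !expr1.
have [chp _] := char_pdiv.
apply: exprDn_pchar => /=.
rewrite (eq_pnat _ (pcharf_eq chp)) pnatX pnat_id ?orbT //.
exact: pcharf_prime chp.
Qed.

Lemma sgM x y : sg (x * y) = sg x * sg y.
Proof. by rewrite /sg exprMn. Qed.

Lemma sg0 : sg 0 = 0.
Proof. by rewrite /sg expr0n; have := e_gt0; case: (form_exp F f). Qed.

Lemma sg1 : sg 1 = 1.
Proof. by rewrite /sg expr1n. Qed.

Lemma sgN x : sg (- x) = - sg x.
Proof. by apply/eqP; rewrite -addr_eq0 -sgD addNr sg0. Qed.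

Lemma sg_eq0 x : (sg x == 0) = (x == 0).
Proof. by rewrite /sg expf_eq0 e_gt0. Qed.

Lemma sg_sum (I : Type) (r : seq I) (P : pred I) (G : I -> F) :
  sg (\sum_(i <- r | P i) G i) = \sum_(i <- r | P i) sg (G i).
Proof. exact: (big_morph sg sgD sg0). Qed.

Lemma sgK : form_ok F f -> forall x, sg (sg x) = x.
Proof.
rewrite /form_ok /sg => ok x; rewrite -exprM.
case: f ok => [_|/(_ erefl) ev]; first by rewrite /= muln1 expr1.
have [_ cF] := char_pdiv.
rewrite /= -expnD addnn.
have -> : (logn (pdiv #|F|) #|F|)./2.*2 = logn (pdiv #|F|) #|F|.
  by rewrite -{2}(odd_double_half (logn (pdiv #|F|) #|F|)) (negbTE ev).
by rewrite -cF expf_card.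
Qed.

End Sg.

Section IP.
Variables (F : finFieldType) (f : ipform).
Local Notation sg := (sg f).

Lemma ipE n (x y : 'rV[F]_n) : ip f x y = \sum_(i < n) x 0 i * sg (y 0 i).
Proof. by []. Qed.

Lemma ipDl n (x y z : 'rV[F]_n) : ip f (x + y) z = ip f x z + ip f y z.
Proof. by rewrite !ipE -big_split; apply: eq_bigr => i _; rewrite mxE mulrDl. Qed.

Lemma ip0l n (z : 'rV[F]_n) : ip f 0 z = 0.
Proof. by rewrite ipE big1 // => i _; rewrite mxE mul0r. Qed.

Lemma ipZl n a (x z : 'rV[F]_n) : ip f (a *: x) z = a * ip f x z.
Proof. by rewrite !ipE mulr_sumr; apply: eq_bigr => i _; rewrite mxE mulrA. Qed.

Lemma ipNl n (x z : 'rV[F]_n) : ip f (- x) z = - ip f x z.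
Proof. by rewrite -scaleN1r ipZl mulN1r. Qed.

Lemma ip_suml n k (a : 'I_k -> F) (X : 'I_k -> 'rV[F]_n) z :
  ip f (\sum_(j < k) a j *: X j) z = \sum_(j < k) a j * ip f (X j) z.
Proof.
rewrite (big_morph (fun x => ip f x z) (fun x y => ipDl x y z) (ip0l z)).
by apply: eq_bigr => j _; rewrite ipZl.
Qed.

Lemma ipDr n (x y z : 'rV[F]_n) : ip f x (y + z) = ip f x y + ip f x z.
Proof. by rewrite !ipE -big_split; apply: eq_bigr => i _; rewrite mxE sgD mulrDr. Qed.

Lemma ip0r n (z : 'rV[F]_n) : ip f z 0 = 0.
Proof. by rewrite ipE big1 // => i _; rewrite mxE sg0 mulr0. Qed.

Lemma ipZr n a (x z : 'rV[F]_n) : ip f x (a *: z) = sg a * ip f x z.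
Proof. by rewrite !ipE mulr_sumr; apply: eq_bigr => i _; rewrite mxE sgM mulrCA. Qed.

Lemma ipNr n (x z : 'rV[F]_n) : ip f x (- z) = - ip f x z.
Proof. by rewrite -scaleN1r ipZr sgN sg1 ?mulN1r. Qed.

Lemma ip_sym (ok : form_ok F f) n (x y : 'rV[F]_n) : ip f y x = sg (ip f x y).
Proof.
rewrite !ipE sg_sum; apply: eq_bigr => i _.
by rewrite sgM sgK // mulrC.
Qed.

Lemma ip_row n (a b c d : 'rV[F]_n) :
  ip f (row_mx a b) (row_mx c d) = ip f a c + ip f b d.
Proof.
rewrite !ipE big_split_ord /=.
by congr (_ + _); apply: eq_bigr => i _; rewrite ?row_mxEl ?row_mxEr.
Qed.

Lemma ip_delta n (i : 'I_n) (x : 'rV[F]_n) : ip f (delta_mx 0 i) x = sg (x 0 i).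
Proof.
rewrite ipE (bigD1 i) //= big1 ?addr0 => [|j ji]; first by rewrite mxE !eqxx mul1r.
by rewrite mxE eqxx (negbTE ji) mul0r.
Qed.

End IP.

Lemma span_setE (F : finFieldType) m (S : {set 'rV[F]_m}) (U : {vspace 'rV[F]_m}) :
  (forall x, (x \in S) = (x \in U)) -> <<enum S>>%VS = U.
Proof.
move=> H; apply/eqP; rewrite eqEsubv; apply/andP; split.
  by apply/span_subvP => x; rewrite mem_enum H.
by apply/subvP => x Ux; apply: memv_span; rewrite mem_enum H.
Qed.

Lemma arith1 (a b k n : nat) : (a + b)%N = n -> (b <= k)%N -> (n - k <= a)%N.
Proof. lia. Qed.

Section Dual.
Variables (F : finFieldType) (f : ipform) (ok : form_ok F f) (n : nat).
Local Notation sg := (sg f).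
Implicit Types C U V : {vspace 'rV[F]_n}.

Definition dM C : 'M[F]_(n, \dim C) := \matrix_(i, j) sg ((vbasis C)`_j 0 i).
Definition kerD C := lker (linfun (@mulmxr F 1 n _ (dM C))).

Lemma mem_kerD C x : (x \in kerD C) = [forall j : 'I_(\dim C), ip f x (vbasis C)`_j == 0].
Proof.
rewrite memv_ker lfunE /=; apply/eqP/forallP => [H j|H].
  move/rowP: H => /(_ j); rewrite !mxE => <-.
  by rewrite ipE; apply/eqP; apply: eq_bigr => i _; rewrite mxE.
apply/matrixP => i j; rewrite (ord1 i) !mxE.
transitivity (ip f x (vbasis C)`_j); last exact/eqP.
by rewrite ipE; apply: eq_bigr => k _; rewrite mxE.
Qed.

Lemma forall_kerD C x :
  [forall c : 'rV[F]_n, (c \in C) ==> (ip f c x == 0)] = (x \in kerD C).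
Proof.
rewrite mem_kerD; apply/forallP/forallP => H j.
  have bC : (vbasis C)`_j \in C by apply: vbasis_mem; apply: mem_nth; rewrite size_tuple.
  have := H (vbasis C)`_j; rewrite bC /= => /eqP e.
  by rewrite ip_sym // e sg0.
apply/implyP => cC; rewrite (coord_vbasis cC) ip_suml big1 // => k _.
by rewrite ip_sym // (eqP (H k)) sg0 mulr0.
Qed.

Lemma dual_kerD C : dual f C = kerD C.
Proof. by rewrite /dual; apply: span_setE => x; rewrite inE forall_kerD. Qed.

Lemma mem_dual C x : reflect (forall c, c \in C -> ip f c x = 0) (x \in dual f C).
Proof.
rewrite dual_kerD -forall_kerD; apply: (iffP forallP) => H c.
  by move=> cC; have := H c; rewrite cC => /eqP.
by apply/implyP => /H ->.
Qed.


Lemma dim_rV m : \dim (fullv : {vspace 'rV[F]_m}) = m.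
Proof. rewrite dimvf; transitivity (1 * m)%N; [exact: dim_matrix | exact: mul1n]. Qed.

Lemma dual_ge C : (n - \dim C <= \dim (dual f C))%N.
Proof.
rewrite dual_kerD /kerD.
have := limg_ker_dim (linfun (@mulmxr F 1 n _ (dM C))) fullv.
rewrite capfv dim_rV => E.
have := dimvS (subvf (linfun (@mulmxr F 1 n _ (dM C)) @: fullv)).
rewrite dim_rV; apply: arith1 E.
Qed.

Lemma nondeg x : (forall y : 'rV[F]_n, ip f y x = 0) -> x = 0.
Proof.
move=> H; apply/rowP => i; rewrite mxE; apply/eqP.
by rewrite -(sg_eq0 f) -ip_delta H.
Qed.

Lemma dim_dual C : \dim (dual f C) = (n - \dim C)%N.
Proof.
apply/eqP; rewrite eqn_leq dual_ge andbT.
set W := (C^C)%VS.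
have dW := dual_ge W; rewrite dimv_compl dim_rV in dW.
have cap : (dual f C :&: dual f W = 0)%VS.
  apply/eqP; rewrite -subv0; apply/subvP => x /memv_capP [/mem_dual xC /mem_dual xW].
  rewrite memv0; apply/eqP; apply: nondeg => y.
  have : y \in (C + W)%VS by rewrite addv_complf memvf.
  by case/memv_addP => c cC [w wW ->]; rewrite ipDl xC // xW // addr0.
have := dimv_sum_cap (dual f C) (dual f W); rewrite cap dimv0 addn0.
have := dimvS (subvf (dual f C + dual f W)); rewrite dim_rV.
have := dimvS (subvf C); rewrite dim_rV; lia.
Qed.

Lemma dual_dual C : dual f (dual f C) = C.
Proof.
apply/eqP; rewrite eq_sym eqEdim; apply/andP; split.
  apply/subvP => c cC; apply/mem_dual => x /mem_dual xd.
  by rewrite ip_sym // xd // sg0.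
rewrite !dim_dual; have := dimvS (subvf C); rewrite dim_rV; lia.
Qed.

Lemma orth_sym1 U V : (U <= dual f V)%VS -> (V <= dual f U)%VS.
Proof.
move/subvP => H; apply/subvP => v vV; apply/mem_dual => u uU.
by rewrite ip_sym //; move/mem_dual: (H u uU) => -> //; rewrite sg0.
Qed.

Lemma orth_sym U V : (U <= dual f V)%VS = (V <= dual f U)%VS.
Proof. by apply/idP/idP; apply: orth_sym1. Qed.

Lemma dual_add U V : dual f (U + V) = (dual f U :&: dual f V)%VS.
Proof.
apply/eqP; rewrite eqEsubv; apply/andP; split; apply/subvP => x.
  move/mem_dual => H; apply/memv_capP; split; apply/mem_dual => c cU; apply: H.
    exact: (subvP (addvSl U V)).
  exact: (subvP (addvSr U V)).
case/memv_capP => /mem_dual H1 /mem_dual H2; apply/mem_dual => c.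
by case/memv_addP => u uU [v vV ->]; rewrite ipDl H1 // H2 // addr0.
Qed.

End Dual.

Section Plot.
Variables (F : finFieldType) (n : nat) (C1 C2 : {vspace 'rV[F]_n}).

Definition phi := linfun (@mulmxr F 1 n (n + n) (row_mx 1%:M 1%:M)).
Definition psi := linfun (@mulmxr F 1 n (n + n) (row_mx 0 1%:M)).
Definition PV := (phi @: C1 + psi @: C2)%VS.

Lemma phiE u : phi u = row_mx u u.
Proof. by rewrite lfunE /= mul_mx_row mulmx1. Qed.
Lemma psiE v : psi v = row_mx 0 v.
Proof. by rewrite lfunE /= mul_mx_row mulmx1 mulmx0. Qed.

Lemma mem_PV z : reflect (exists u, exists v, [/\ u \in C1, v \in C2 & z = row_mx u (u + v)])
  (z \in PV).
Proof.
apply: (iffP memv_addP) => [[a /memv_imgP [u uC ->] [b /memv_imgP [v vC ->] ->]]|].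
  by exists u, v; split => //; rewrite phiE psiE add_row_mx addr0.
case=> u [v [uC vC ->]]; exists (phi u); first exact: memv_img.
exists (psi v); first exact: memv_img.
by rewrite phiE psiE add_row_mx addr0.
Qed.

Lemma plotkinE : plotkin C1 C2 = PV.
Proof.
rewrite /plotkin; apply: span_setE => z; apply/imsetP/mem_PV.
  by case=> w; rewrite inE => /andP [w1 w2] ->; exists w.1, w.2.
by case=> u [v [uC vC ->]]; exists (u, v) => //; rewrite inE uC vC.
Qed.

Lemma mem_plotkin z : reflect (exists u, exists v, [/\ u \in C1, v \in C2 & z = row_mx u (u + v)])
  (z \in plotkin C1 C2).
Proof. by rewrite plotkinE; apply: mem_PV. Qed.

Lemma dim_plotkin : \dim (plotkin C1 C2) = (\dim C1 + \dim C2)%N.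
Proof.
rewrite plotkinE /PV.
have cap : (phi @: C1 :&: psi @: C2 = 0)%VS.
  apply/eqP; rewrite -subv0; apply/subvP => z /memv_capP [/memv_imgP [u _ ->] /memv_imgP [v _]].
  rewrite phiE psiE => /eq_row_mx [u0 _]; by rewrite memv0 u0 row_mx0.
have := dimv_sum_cap (phi @: C1) (psi @: C2); rewrite cap dimv0 addn0 => ->.
rewrite !limg_dim_eq //; apply/eqP; rewrite -subv0; apply/subvP => x /memv_capP [_].
  by rewrite memv_ker psiE memv0 -row_mx0 => /eqP /eq_row_mx [_ ->].
by rewrite memv_ker phiE memv0 -row_mx0 => /eqP /eq_row_mx [-> _].
Qed.

End Plot.

Unset Implicit Arguments.

Theorem corollary3 (F : finFieldType) (f : ipform) (n : nat)
  (C1 C2 : {vspace 'rV[F]_n}) :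
  form_ok F f ->
  ((exists m : nat, #|F| = (2 ^ m)%N) /\ self_orthogonal f C2 \/
   self_orthogonal f C1 /\ self_orthogonal f C2) ->
  let C := plotkin C1 C2 in
  ((self_orthogonal f C <-> (C1 <= dual f C2)%VS) /\
   ((C1 <= dual f C2)%VS <-> (C2 <= dual f C1)%VS)) /\
  (LCD f C <-> ((2 * \dim (C1 :&: dual f C2))%N%:Z = (\dim C1)%:Z - (\dim C2)%:Z)) /\
  ((self_dual f C <-> C1 = dual f C2) /\ (C1 = dual f C2 <-> C2 = dual f C1)).
Proof.
move=> ok H P.
have so2 : (C2 <= dual f C2)%VS by case: H => [[]|[]].
have K1 : forall u, u \in C1 -> u + u \in dual f C1.
  case: H => [[[m cF] _]|[so1 _]] u uC.
    have ch2 : 2 \in [pchar F] by apply: (card_finPcharP cF).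
    apply/mem_dual => // c _.
    by rewrite ipDr -mulr2n -mulr_natl (pcharf0 ch2) mul0r.
  by apply: rpredD; apply: (subvP so1).
have memDP : forall x y, (row_mx x y \in dual f P) <->
    (x + y \in dual f C1 /\ y \in dual f C2).
  move=> x y; split.
    move/(mem_dual ok) => Hd; split; apply/(mem_dual ok) => c cC.
      have := Hd (row_mx c (c + 0)); rewrite ip_row addr0 -ipDr; apply.
      by apply/mem_plotkin; exists c, 0; split; rewrite ?mem0v ?addr0.
    have := Hd (row_mx 0 (0 + c)); rewrite ip_row add0r ip0l add0r; apply.
    by apply/mem_plotkin; exists 0, c; split; rewrite ?mem0v ?add0r.
  case=> /(mem_dual ok) H1 /(mem_dual ok) H2; apply/(mem_dual ok) => z.
  case/mem_plotkin => u [v [uC vC ->]].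
  by rewrite ip_row ipDl addrA -ipDr H1 // H2 // addr0.
have part1 : (P <= dual f P)%VS <-> (C1 <= dual f C2)%VS.
  split.
    move/subvP => sP; apply/subvP => u uC.
    have : row_mx u (u + 0) \in dual f P.
      by apply: sP; apply/mem_plotkin; exists u, 0; split; rewrite ?mem0v.
    by rewrite addr0 => /memDP [].
  move=> s12; apply/subvP => z /mem_plotkin [u [v [uC vC ->]]]; apply/memDP; split.
    rewrite addrA; apply: rpredD; [exact: K1 | exact: (subvP (orth_sym1 ok s12))].
  by apply: rpredD; [exact: (subvP s12) | exact: (subvP so2)].
set A := (C1 :&: dual f C2)%VS.
set B := (C2 :&: dual f C1)%VS.
have hull : (P :&: dual f P)%VS = 0%VS <-> (A = 0%VS /\ B = 0%VS).
  split.
    move=> h0.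
    have inH : forall z, z \in P -> z \in dual f P -> z = 0.
      by move=> z zP zD; apply/eqP; rewrite -memv0 -h0 memv_cap zP zD.
    split; apply/eqP; rewrite -subv0; apply/subvP => w /memv_capP [w1 w2]; rewrite memv0; apply/eqP.
      have h1 : row_mx w w \in P.
        by apply/mem_plotkin; exists w, 0; split; rewrite ?mem0v ?addr0.
      have h2 : row_mx w w \in dual f P by apply/memDP; split; [exact: K1 | exact: w2].
      by move: (inH _ h1 h2); rewrite -row_mx0 => /eq_row_mx [-> _].
    have h1 : row_mx 0 w \in P.
      by apply/mem_plotkin; exists 0, w; split; rewrite ?mem0v ?add0r.
    have h2 : row_mx 0 w \in dual f P.
      by apply/memDP; split; [rewrite add0r; exact: w2 | exact: (subvP so2)].
    by move: (inH _ h1 h2); rewrite -row_mx0 => /eq_row_mx [_ ->].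
  case=> A0 B0; apply/eqP; rewrite -subv0; apply/subvP => z /memv_capP [/mem_plotkin [u [v [uC vC ze]]] zD].
  rewrite ze in zD; case/memDP: zD => d1 d2.
  have uD : u \in dual f C2 by have := rpredB d2 (subvP so2 v vC); rewrite addrK.
  have u0 : u = 0 by apply/eqP; rewrite -memv0 -A0 memv_cap uC uD.
  rewrite u0 !add0r in d1.
  have v0 : v = 0 by apply/eqP; rewrite -memv0 -B0 memv_cap vC d1.
  by rewrite ze u0 v0 addr0 row_mx0 memv0.
have dA := dimv_sum_cap C1 (dual f C2).
have dS := dim_dual ok (C1 + dual f C2).
rewrite dual_add // dual_dual // capvC -/B in dS.
rewrite (dim_dual ok C2) -/A in dA.
have k1le := dimvS (subvf C1); rewrite dim_rV in k1le.
have k2le := dimvS (subvf C2); rewrite dim_rV in k2le.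
have Sle := dimvS (subvf (C1 + dual f C2)); rewrite dim_rV in Sle.
have dP := dim_plotkin C1 C2.
have dDP := dim_dual ok P.
split; first by split => //; rewrite (orth_sym ok C1 C2).
split.
  rewrite /LCD hull; split => [[A0 B0]|e].
    move: dA dS; rewrite A0 B0 !dimv0; lia.
  have [a0 b0] : \dim A = 0%N /\ \dim B = 0%N by lia.
  by split; apply/eqP; rewrite -dimv_eq0; apply/eqP.
split; last by split => e; rewrite e dual_dual.
rewrite /self_dual; split => e.
  have s12 : (C1 <= dual f C2)%VS by apply/part1; rewrite -e subvv.
  have de := congr1 (@dimv _ _) e; rewrite dDP -/P in de.
  apply/eqP; rewrite eqEdim s12 dim_dual //=; fold P in dP; lia.
have s12 : (C1 <= dual f C2)%VS by rewrite e subvv.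
have de := congr1 (@dimv _ _) e; rewrite dim_dual // in de.
apply/eqP; rewrite eqEdim (proj2 part1 s12) dDP /=; fold P in dP; lia.
Qed.
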